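(* Let $D$ be a locally semicomplete digraph such that $S(D)$ is chordal and $D$ contains neither an induced directed cycle consisting of non-symmetric arcs nor any of the digraphs $F_a, F_b, F_c, F_d$ (described in the context) as an induced subdigraph. Suppose $(u,v,w)$ is a violating triple. Then: (1) if $uv$ is a non-symmetric arc, there exists a di-simplicial vertex $u'$ of $S(D)$ (possibly $u'=u$) such that $(u',v,w)$ is a violating triple and $u'v$ is a non-symmetric arc; (2) if $vw$ is a non-symmetric arc, there exists a di-simplicial vertex $w'$ of $S(D)$ (possibly $w'=w$) such that $(u,v,w')$ is a violating triple and $vw'$ is a non-symmetric arc.
   Context: Digraphs are finite, have no loops and no multiple arcs, but may contain digons; an arc lying in a digon is called symmetric, otherwise non-symmetric. $N^-(v)$ / $N^+(v)$ denote the sets of in-/out-neighbours of $v$. A vertex $v$ is di-simplicial if for every $u \in N^-(v)$ and $w \in N^+(v)$ with $u \neq w$, $uw$ is an arc. A digraph is chordal if every induced subdigraph contains a di-simplicial vertex. $S(D)$ is the spanning subdigraph of $D$ consisting of all symmetric arcs of $D$. A digraph is semicomplete if between any two distinct vertices there is at least one arc; $D$ is locally semicomplete if for every vertex $v$, both $N^-(v)$ and $N^+(v)$ induce semicomplete subdigraphs. A directed cycle $v_1\dots v_kv_1$ is induced if there is no arc between $v_i,v_j$ whenever $|i-j|\notin\{1,k-1\}$. A violating triple is an ordered triple $(u,v,w)$ of vertices where $v$ is a di-simplicial vertex of $S(D)$, $u \in N^-(v)$, $w \in N^+(v)$, $u \neq w$, and $uw$ is not an arc of $D$. The digraphs $F_a,F_b,F_c$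 have vertex set $\{1,2,3,4\}$ with symmetric arcs $1\leftrightarrow 3$ and $2 \leftrightarrow 4$, plus: $F_a$: non-symmetric arcs $1\to2$, $2\to3$, $4\to1$ and symmetric arc $3\leftrightarrow4$; $F_b$: non-symmetric arcs $1\to2$, $2\to3$, $3\to4$, $4\to1$; $F_c$: non-symmetric arcs $1\to2$, $2\to3$, $4\to3$, $4\to1$. $F_d$ is the directed 3-cycle $1\to2\to3\to1$ with all arcs non-symmetric. *)

(* Defs.v *)
From mathcomp Require Import all_boot.
Set Implicit Arguments. Unset Strict Implicit. Unset Printing Implicit Defensive.

(* Loops are excluded by a separate
   hypothesis [irreflexive A]; multiple arcs cannot occur; digons allowed. *)

Section Digraphs.
Variable T : finType.
Implicit Types (A : rel T).

Definition symm_part A : rel T := fun x y => A x y && A y x.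

Definition nonsym_arc A (x y : T) : bool := A x y && ~~ A y x.

Definition disimplicial A (v : T) : Prop :=
  forall u w, A u v -> A v w -> u != w -> A u w.

Definition disimplicial_in A (X : {set T}) (v : T) : Prop :=
  v \in X /\
  forall u w, u \in X -> w \in X -> A u v -> A v w -> u != w -> A u w.

Definition chordal A : Prop :=
  forall X : {set T}, X != set0 -> exists v, disimplicial_in A X v.

Definition semicomplete_on A (X : {set T}) : Prop :=
  forall x y, x \in X -> y \in X -> x != y -> A x y || A y x.

Definition in_nbhd A (v : T) : {set T} := [set u | A u v].
Definition out_nbhd A (v : T) : {set T} := [set w | A v w].

Definition locally_semicomplete A : Prop :=
  forall v, semicomplete_on A (in_nbhd A v) /\ semicomplete_on A (out_nbhd A v).

Definition has_induced_nonsym_cycle A : Prop :=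
  exists (k : nat) (f : 'I_k -> T),
    2 < k /\ injective f /\
    (forall i j : 'I_k, j = (i.+1 %% k) :> nat -> nonsym_arc A (f i) (f j)) /\
    (forall i j : 'I_k, j <> (i.+1 %% k) :> nat -> i <> (j.+1 %% k) :> nat ->
        ~~ A (f i) (f j)).

Definition contains_induced (n : nat) (F : rel 'I_n) A : Prop :=
  exists f : 'I_n -> T, injective f /\ forall i j, A (f i) (f j) = F i j.

End Digraphs.

(* The small digraphs; vertex k of the paper is the ordinal k-1. *)
Definition arcs_rel n (E : seq (nat * nat)) : rel 'I_n :=
  fun i j => (nat_of_ord i, nat_of_ord j) \in E.

(* symmetric 1<->3, 2<->4, non-symmetric 1->2, 2->3, 4->1, symmetric 3<->4 *)
Definition F_a : rel 'I_4 :=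
  @arcs_rel 4 [:: (0,2); (2,0); (1,3); (3,1); (0,1); (1,2); (3,0); (2,3); (3,2)].
(* symmetric 1<->3, 2<->4, non-symmetric 1->2, 2->3, 3->4, 4->1 *)
Definition F_b : rel 'I_4 :=
  @arcs_rel 4 [:: (0,2); (2,0); (1,3); (3,1); (0,1); (1,2); (2,3); (3,0)].
(* symmetric 1<->3, 2<->4, non-symmetric 1->2, 2->3, 4->3, 4->1 *)
Definition F_c : rel 'I_4 :=
  @arcs_rel 4 [:: (0,2); (2,0); (1,3); (3,1); (0,1); (1,2); (3,2); (3,0)].
Definition F_d : rel 'I_3 := @arcs_rel 3 [:: (0,1); (1,2); (2,0)].

Definition violating_triple (T : finType) (A : rel T) (u v w : T) : Prop :=
  disimplicial (symm_part A) v /\ A u v /\ A v w /\ u != w /\ ~~ A u w.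

(* Main.v *)
Require Import Defs.
From mathcomp Require Import all_boot.
Set Implicit Arguments. Unset Strict Implicit. Unset Printing Implicit Defensive.

Lemma mkF (T : finType) (A : rel T) n (F : rel 'I_n) (s : seq T) (x0 : T) :
  size s = n -> uniq s ->
  (forall i j : 'I_n, A (nth x0 s i) (nth x0 s j) = F i j) -> contains_induced F A.
Proof.
move=> Hs Hu H; exists (fun i => nth x0 s i); split=> // i j /eqP.
rewrite nth_uniq ?Hs // => /eqP; exact: val_inj.
Qed.

Lemma uniq4 (T : eqType) (a b c d : T) :
  a != b -> a != c -> a != d -> b != c -> b != d -> c != d -> uniq [:: a; b; c; d].
Proof.
move=> ab ac ad bc bd cd.
by rewrite /= !inE !negb_or ab ac ad bc bd cd.
Qed.

Lemma uniq3 (T : eqType) (a b c : T) :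
  a != b -> a != c -> b != c -> uniq [:: a; b; c].
Proof. by move=> ab ac bc; rewrite /= !inE !negb_or ab ac bc. Qed.

Lemma noFb (T : finType) (A : rel T) a b c d : irreflexive A ->
  uniq [:: a; b; c; d] -> ~ contains_induced F_b A ->
  ~~ [&& A a b, A b c, A c d, A d a, A a c, A c a, A b d, A d b,
        ~~ A b a, ~~ A c b, ~~ A d c & ~~ A a d].
Proof.
move=> Hi U HF; apply/negP=> /andP[h1 /andP[h2 /andP[h3 /andP[h4 /andP[h5 /andP[h6
  /andP[h7 /andP[h8 /andP[h9 /andP[h10 /andP[h11 h12]]]]]]]]]]].
apply: HF; apply: (@mkF _ _ _ _ [:: a; b; c; d] a) => //.
case=> [[|[|[|[|//]]]] Hi'] [[|[|[|[|//]]]] Hj] /=;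
  rewrite ?Hi ?h1 ?h2 ?h3 ?h4 ?h5 ?h6 ?h7 ?h8 ?(negbTE h9) ?(negbTE h10) ?(negbTE h11) ?(negbTE h12) //.
Qed.

Lemma noFc (T : finType) (A : rel T) a b c d : irreflexive A ->
  uniq [:: a; b; c; d] -> ~ contains_induced F_c A ->
  ~~ [&& A a b, A b c, A d c, A d a, A a c, A c a, A b d, A d b,
        ~~ A b a, ~~ A c b, ~~ A c d & ~~ A a d].
Proof.
move=> Hi U HF; apply/negP=> /andP[h1 /andP[h2 /andP[h3 /andP[h4 /andP[h5 /andP[h6
  /andP[h7 /andP[h8 /andP[h9 /andP[h10 /andP[h11 h12]]]]]]]]]]].
apply: HF; apply: (@mkF _ _ _ _ [:: a; b; c; d] a) => //.
case=> [[|[|[|[|//]]]] Hi'] [[|[|[|[|//]]]] Hj] /=;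
  rewrite ?Hi ?h1 ?h2 ?h3 ?h4 ?h5 ?h6 ?h7 ?h8 ?(negbTE h9) ?(negbTE h10) ?(negbTE h11) ?(negbTE h12) //.
Qed.

Lemma noFd (T : finType) (A : rel T) a b c : irreflexive A ->
  uniq [:: a; b; c] -> ~ contains_induced F_d A ->
  ~~ [&& A a b, A b c, A c a, ~~ A b a, ~~ A c b & ~~ A a c].
Proof.
move=> Hi U HF; apply/negP=> /andP[h1 /andP[h2 /andP[h3 /andP[h4 /andP[h5 h6]]]]].
apply: HF; apply: (@mkF _ _ _ _ [:: a; b; c] a) => //.
case=> [[|[|[|//]]] Hi'] [[|[|[|//]]] Hj] /=;
  rewrite ?Hi ?h1 ?h2 ?h3 ?(negbTE h4) ?(negbTE h5) ?(negbTE h6) //.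
Qed.

Lemma Qlem (T : finType) (S : rel T) : chordal S -> symmetric S -> irreflexive S ->
  forall n (X K : {set T}), #|X :|: K| <= n -> X != set0 ->
  (forall a b, a \in K -> b \in K -> a != b -> S a b) ->
  (forall x y, x \in X -> S x y -> y \notin X -> y \in K) ->
  exists2 x, x \in X & disimplicial S x.
Proof.
move=> Hch Hsym Hirr; elim=> [|n IH] X K.
  rewrite leqn0 cards_eq0 setU_eq0 => /andP[/eqP -> _]; by rewrite eqxx.
move=> Hn Xn0 HK HB.
have [s [sW Hs]] : exists s, disimplicial_in S (X :|: K) s.
  apply: Hch; case/set0Pn: Xn0 => x xX; apply/set0Pn; exists x; by rewrite inE xX.
have inW : forall z, z \in X -> forall y, S z y -> y \in X :|: K.
  move=> z zX y zy; rewrite inE; case: (boolP (y \in X)) => //= yX; exact: HB zy yX.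
case: (boolP (s \in X)) => sX.
  exists s => // a b Has Hsb ab; apply: Hs => //.
    by apply: (inW s sX); rewrite Hsym.
  exact: (inW s sX).
have sK : s \in K by move: sW; rewrite inE (negbTE sX).
set X' := [set z in X | ~~ S s z].
set K' := [set z in X :|: K | S s z].
case: (eqVneq X' set0) => [X'0|X'n0].
  case/set0Pn: Xn0 => x xX; exists x => //.
  have Hall : forall z, z \in X :|: K -> z != s -> S s z.
    move=> z; rewrite inE; case/orP => [zX _| zK zs].
      apply/negPn/negP => nz.
      have : z \in X' by rewrite inE zX nz.
      by rewrite X'0 inE.
    by apply: HK; rewrite // eq_sym.
  move=> a b Hax Hxb ab.
  have aW : a \in X :|: K by apply: (inW x) => //; rewrite Hsym.
  have bW : b \in X :|: K by exact: (inW x xX).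
  case: (eqVneq a s) => [eas|nas].
    by rewrite eas; apply: Hall; rewrite // eq_sym -eas.
  case: (eqVneq b s) => [ebs|nbs].
    by rewrite ebs Hsym; apply: Hall.
  apply: (Hs a b aW bW) => //; last exact: Hall.
  by rewrite Hsym; apply: Hall.
have [x xX' Hx] : exists2 x, x \in X' & disimplicial S x; last first.
  by exists x => //; move: xX'; rewrite inE => /andP[].
apply: (IH X' K') => //.
- have P : X' :|: K' \proper X :|: K.
    apply/properP; split.
      apply/subsetP => z; rewrite !inE.
      by case: (z \in X); case: (z \in K); rewrite /= ?andbF.
    exists s => //; by rewrite !inE (negbTE sX) /= (Hirr s) andbF.
  rewrite -ltnS; exact: leq_trans (proper_card P) Hn.
- move=> a b; rewrite !inE => /andP[aW sa] /andP[bW sb] ab.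
  apply: (Hs a b) => //; [by rewrite inE | by rewrite inE | by rewrite Hsym].
- move=> z y; rewrite !inE => /andP[zX nsz] zy yX'.
  case: (boolP (y \in X)) => yX.
    by move: yX'; rewrite yX /= negbK => ->.
  have yK := HB z y zX zy yX.
  rewrite yK orbT /=.
  have ys : s != y.
    apply/eqP => esy; move: nsz; by rewrite esy Hsym zy.
  exact: HK sK yK ys.
Qed.

Lemma Q2 (T : finType) (S : rel T) : chordal S -> symmetric S -> irreflexive S ->
  forall (X : {set T}) w, X != set0 -> w \notin X ->
  (forall x, x \in X -> ~~ S x w) ->
  (forall x y, x \in X -> S x y -> y \notin X -> S y w) ->
  exists2 x, x \in X & disimplicial S x.
Proof.
move=> Hch Hsym Hirr X w Xn0 wX Hxw HB.
set B := [set y | (y \notin X) && [exists x in X, S x y]].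
set Z := X :|: B :|: [set w].
have [s [sZ Hs]] : exists s, disimplicial_in S Z s.
  apply: Hch; apply/set0Pn; exists w; by rewrite !inE eqxx orbT.
have inZ : forall x, x \in X -> forall y, S x y -> y \in Z.
  move=> x xX y xy; rewrite !inE; case: (boolP (y \in X)) => //= yX.
  apply/orP; left; apply/existsP; exists x; by rewrite xX.
case: (boolP (s \in X)) => sX.
  exists s => // a b Has Hsb ab; apply: Hs => //.
    by apply: (inZ s sX); rewrite Hsym.
  exact: (inZ s sX).
case: (eqVneq s w) => [esw|nsw].
  have memK : forall y, (y \in [set y in Z | S w y]) = (y \in Z) && S w y.
    by move=> y; rewrite inE.
  apply: (@Qlem T S Hch Hsym Hirr _ X [set y in Z | S w y] (leqnn _)) => //.
    move=> a b; rewrite !memK => /andP[aZ wa] /andP[bZ wb] ab.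
    apply: (Hs a b aZ bZ) => //; by rewrite esw // Hsym.
  move=> x y xX xy yX; rewrite memK (inZ x xX y xy) /= Hsym.
  exact: HB xy yX.
have sB : s \in B.
  by move: sZ; rewrite !inE (negbTE sX) (negbTE nsw) orbF /= .
move: (sB); rewrite inE => /andP[_ /existsP[x /andP[xX xs]]].
have sw : S s w by exact: HB xs sX.
have xw : x != w by apply/eqP => exw; move: wX; rewrite -exw xX.
have xZ : x \in Z by rewrite !inE xX.
have wZ : w \in Z by rewrite !inE eqxx orbT.
have := Hs x w xZ wZ xs sw xw.
by rewrite (negbTE (Hxw x xX)).
Qed.

Lemma lsc_out (T : finType) (A : rel T) : locally_semicomplete A ->
  forall z a b, A z a -> A z b -> a != b -> A a b || A b a.
Proof. move=> H z a b za zb ab; apply: (proj2 (H z)) => //; by rewrite inE. Qed.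

Lemma lsc_in (T : finType) (A : rel T) : locally_semicomplete A ->
  forall z a b, A a z -> A b z -> a != b -> A a b || A b a.
Proof. move=> H z a b za zb ab; apply: (proj1 (H z)) => //; by rewrite inE. Qed.

Lemma claim1 (T : finType) (A : rel T) : irreflexive A -> locally_semicomplete A ->
  ~ contains_induced F_b A -> ~ contains_induced F_c A -> ~ contains_induced F_d A ->
  forall v w x y, disimplicial (symm_part A) v -> A v w -> A x v -> ~~ A v x ->
  ~~ A x w -> A x y -> A y x -> ~~ ((A y v && ~~ A v y) && ~~ A y w) ->
  A y w && A w y.
Proof.
move=> Hi Hl Hb Hc Hd v w x y Hv vw xv nvx nxw xy yx yX.
have nxy : x != y by apply/eqP => e; move: xy; rewrite e Hi.
have nxv : x != v by apply/eqP => e; move: xv; rewrite e Hi.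
have nvw : v != w by apply/eqP => e; move: vw; rewrite e Hi.
have nyv : y != v by apply/eqP => e; move: nvx; rewrite -e yx.
have nyw : y != w by apply/eqP => e; move: nxw; rewrite -e xy.
have nxw' : x != w by apply/eqP => e; move: nvx; rewrite e vw.
have nyx : y != x by rewrite eq_sym.
have nvx' : v != x by rewrite eq_sym.
have nwx : w != x by rewrite eq_sym.
have nwy : w != y by rewrite eq_sym.
have nvy : v != y by rewrite eq_sym.
have nwv : w != v by rewrite eq_sym.
have f1 : A y v || A v y by exact: lsc_out Hl x y v xy xv nyv.
have f2 : A v y ==> (A y w || A w y).
  by apply/implyP => h; exact: lsc_out Hl v y w h vw nyw.
have f3 : A y w ==> (A x w || A w x).
  by apply/implyP => h; exact: lsc_out Hl y x w yx h nxw'.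
have f4 : A w y ==> (A x w || A w x).
  by apply/implyP => h; exact: lsc_in Hl y x w xy h nxw'.
have f5 := noFd Hi (uniq3 nxv nxw' nvw) Hd.
have f6 : (A y v && A v y) ==> (A w v) ==> (A y w && A w y).
  apply/implyP => h1; apply/implyP => h2.
  apply: (Hv y w) => //; by rewrite /symm_part vw h2.
have f7 := noFb Hi (uniq4 nxv nxy nxw' nvy nvw nyw) Hb.
have f8 := noFc Hi (uniq4 nxv nxy nxw' nvy nvw nyw) Hc.
have f9 := noFc Hi (uniq4 nwx nwv nwy nxv nxy nvy) Hc.
move: f1 f2 f3 f4 f5 f6 f7 f8 f9 yX.
rewrite vw xv xy yx (negbTE nvx) (negbTE nxw) /=.
by case: (A w x); case: (A y v); case: (A v y); case: (A y w); case: (A w y);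
  case: (A w v) => /= *.
Qed.

Lemma claim2 (T : finType) (A : rel T) : irreflexive A -> locally_semicomplete A ->
  ~ contains_induced F_b A -> ~ contains_induced F_c A -> ~ contains_induced F_d A ->
  forall u v x y, disimplicial (symm_part A) v -> A u v -> A v x -> ~~ A x v ->
  ~~ A u x -> A x y -> A y x -> ~~ ((A v y && ~~ A y v) && ~~ A u y) ->
  A y u && A u y.
Proof.
move=> Hi Hl Hb Hc Hd u v x y Hv uv vx nxv nux xy yx yX.
have nxy : x != y by apply/eqP => e; move: xy; rewrite e Hi.
have nxv' : x != v by apply/eqP => e; move: vx; rewrite e Hi.
have nuv : u != v by apply/eqP => e; move: uv; rewrite e Hi.
have nyv : y != v by apply/eqP => e; move: nxv; rewrite -e xy.
have nyu : y != u by apply/eqP => e; move: nux; rewrite -e yx.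
have nxu : x != u by apply/eqP => e; move: nxv; rewrite e uv.
have nyx : y != x by rewrite eq_sym.
have nvx : v != x by rewrite eq_sym.
have nux' : u != x by rewrite eq_sym.
have nuy : u != y by rewrite eq_sym.
have nvy : v != y by rewrite eq_sym.
have nvu : v != u by rewrite eq_sym.
have g1 : A y v || A v y by exact: lsc_in Hl x y v yx vx nyv.
have g2 : A y v ==> (A y u || A u y).
  by apply/implyP => h; exact: lsc_in Hl v y u h uv nyu.
have g3 : A u y ==> (A u x || A x u).
  by apply/implyP => h; exact: lsc_in Hl y u x h xy nux'.
have g4 : A y u ==> (A x u || A u x).
  by apply/implyP => h; exact: lsc_out Hl y x u yx h nxu.
have g5 := noFd Hi (uniq3 nxu nxv' nuv) Hd.
have g6 : (A v y && A y v) ==> (A v u) ==> (A y u && A u y).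
  apply/implyP => h1; apply/implyP => h2.
  rewrite andbC; apply: (Hv u y) => //; by rewrite /symm_part uv h2.
have g7 := noFb Hi (uniq4 nxu nxy nxv' nuy nuv nyv) Hb.
have g8 := noFc Hi (uniq4 nvx nvu nvy nxu nxy nuy) Hc.
have g9 := noFc Hi (uniq4 nxu nxy nxv' nuy nuv nyv) Hc.
move: g1 g2 g3 g4 g5 g6 g7 g8 g9 yX.
rewrite uv vx xy yx (negbTE nxv) (negbTE nux) /=.
by case: (A x u); case: (A y v); case: (A v y); case: (A u y); case: (A y u);
  case: (A v u) => /= *.
Qed.

Theorem lemma2p3 (T : finType) (A : rel T) :
  irreflexive A ->
  locally_semicomplete A ->
  chordal (symm_part A) ->
  ~ has_induced_nonsym_cycle A ->
  ~ contains_induced F_a A -> ~ contains_induced F_b A ->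
  ~ contains_induced F_c A -> ~ contains_induced F_d A ->
  forall u v w : T, violating_triple A u v w ->
    (nonsym_arc A u v ->
       exists u', disimplicial (symm_part A) u' /\
                  violating_triple A u' v w /\ nonsym_arc A u' v) /\
    (nonsym_arc A v w ->
       exists w', disimplicial (symm_part A) w' /\
                  violating_triple A u v w' /\ nonsym_arc A v w').
Proof.
move=> Hi Hl Hch _ _ Hb Hc Hd u v w [Hv [uv [vw [nuw0 nuw]]]].
have Ssym : symmetric (symm_part A) by move=> a b; rewrite /symm_part andbC.
have Sirr : irreflexive (symm_part A) by move=> a; rewrite /symm_part Hi.
split.
- move=> nsuv.
  set X := [set x | nonsym_arc A x v && ~~ A x w].
  have [x xX Hx] : exists2 x, x \in X & disimplicial (symm_part A) x.
    apply: (Q2 Hch Ssym Sirr (w := w)).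
    + by apply/set0Pn; exists u; rewrite inE nsuv nuw.
    + by rewrite inE /nonsym_arc vw /= andbF.
    + by move=> x; rewrite inE => /andP[_ nxw]; rewrite /symm_part (negbTE nxw).
    + move=> x y; rewrite !inE /nonsym_arc /symm_part => /andP[/andP[xv nvx] nxw] /andP[xy yx] yX.
      exact: (claim1 Hi Hl Hb Hc Hd Hv vw xv nvx nxw xy yx yX).
  move: xX; rewrite inE => /andP[nsxv nxw].
  exists x; split => //; split => //.
  case/andP: (nsxv) => xv nvx.
  do 3!(split => //); split => //.
  by apply/eqP => e; move: nvx; rewrite e vw.
- move=> nsvw.
  set X := [set x | nonsym_arc A v x && ~~ A u x].
  have [x xX Hx] : exists2 x, x \in X & disimplicial (symm_part A) x.
    apply: (Q2 Hch Ssym Sirr (w := u)).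
    + by apply/set0Pn; exists w; rewrite inE nsvw nuw.
    + by rewrite inE /nonsym_arc uv /= andbF.
    + by move=> x; rewrite inE => /andP[_ nux]; rewrite /symm_part (negbTE nux) andbF.
    + move=> x y; rewrite !inE /nonsym_arc /symm_part => /andP[/andP[vx nxv] nux] /andP[xy yx] yX.
      exact: (claim2 Hi Hl Hb Hc Hd Hv uv vx nxv nux xy yx yX).
  move: xX; rewrite inE => /andP[nsvx nux].
  exists x; split => //; split => //.
  case/andP: (nsvx) => vx nxv.
  do 3!(split => //); split => //.
  by apply/eqP => e; move: nxv; rewrite -e uv.
Qed.
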